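(* Let $A$ be a finite set of alternatives with $|A|\ge 3$, let $N=\{1,\dots,n\}$ with $n\ge 2$, and let $\mathbb{D}$ be a minimally rich domain of linear orders over $A$ that is connected with two distinct neighbours. If $f:\mathbb{D}^n\to A$ is unanimous and strategy-proof, then $f$ satisfies dictatorship.
   Context: A domain is a set $\mathbb{D}$ of linear orders (strict preferences) over $A$; a preference profile is $P=(P_1,\dots,P_n)\in\mathbb{D}^n$. For a linear order $P_i$, $r_k(P_i)$ is its $k$-th ranked alternative. $\mathbb{D}$ is minimally rich if every $a\in A$ is ranked first in some $P_i\in\mathbb{D}$. Two linear orders $P_i,P_i'$ are adjacent if $P_i'$ is obtained from $P_i$ by swapping two consecutively ranked alternatives and leaving all other ranks unchanged. A social choice function (scf) is a map $f:\mathbb{D}^n\to A$. It is unanimous if $f(P)=a$ whenever every voter ranks $a$ first. It is strategy-proof if there is no voter $i$, profile $P$, and $P_i'\in\mathbb{D}$ with $f(P_i',P_{-i})\,P_i\,f(P_i,P_{-i})$. It satisfies dictatorship if there is a voter $i$ with $f(P)=r_1(P_i)$ for all $P\in\mathbb{D}^n$. A path in $\mathbb{D}$ is a sequence of distinct preferences in $\mathbb{D}$ in which consecutive ones are adjacent; $\mathbb{D}$ is connected if any two of its preferences are joined by a path in $\mathbb{D}$. For $\bar{\mathbb{D}}\subseteq\mathbb{D}$, a neighbour of $\bar{\mathbb{D}}$ in $\mathbb{D}$ is a $P_i\in\mathbb{D}\setminus\bar{\mathbb{D}}$ adjacent to some element of $\bar{\mathbb{D}}$. Two preferences $P_i,P_i'\in\mathbb{D}$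 are top-connected in $\mathbb{D}$ if there is a path from $P_i$ to $P_i'$ in $\mathbb{D}$ all of whose members have the same top-ranked alternative. The top-connected closure $\mathbb{D}^{TCC}(P_i)$ is the set of preferences in $\mathbb{D}$ top-connected to $P_i$, together with $P_i$. $\mathbb{D}$ is connected with two distinct neighbours if (1) $\mathbb{D}$ is connected, and (2) for every $P_i\in\mathbb{D}$ there exist two neighbours $P_i',P_i''$ of $\mathbb{D}^{TCC}(P_i)$ in $\mathbb{D}$ with $r_1(P_i')\ne r_1(P_i'')$. *)

(* Defs.v *)
From mathcomp Require Import all_boot.
Set Implicit Arguments. Unset Strict Implicit. Unset Printing Implicit Defensive.

(* A linear order (strict preference) over a finite set A of alternatives is
   represented by its ranking: an injective (hence bijective) map
   r : 'I_#|A| -> A, where r k is the (k+1)-th ranked alternative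
   (ranks are 0-indexed: r 0 is the top alternative). *)
Definition linord (A : finType) := {f : {ffun 'I_#|A| -> A} | injectiveb f}.

Section Prefs.
Variable A : finType.
Implicit Types P Q : linord A.

Definition rk P (k : 'I_#|A|) : A := (val P) k.

Definition prefers P (a b : A) : bool :=
  [exists i : 'I_#|A|, exists j : 'I_#|A|, [&& i < j, rk P i == a & rk P j == b]].

Definition is_top P (a : A) : bool :=
  [exists i : 'I_#|A|, (val i == 0) && (rk P i == a)].

Definition adjacent P Q : bool :=
  [exists k : 'I_#|A|, exists k' : 'I_#|A|,
     [&& val k' == (val k).+1, rk Q k == rk P k', rk Q k' == rk P k &
         [forall j : 'I_#|A|, ((j != k) && (j != k')) ==> (rk Q j == rk P j)]]].

Definition is_path_in (D : {set linord A}) (s : seq (linord A)) P Q : Prop :=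
  [/\ head P s = P, last P s = Q, uniq s, all (fun x => x \in D) s &
      path adjacent P (behead s)] /\ s != [::].

Definition dom_connected (D : {set linord A}) : Prop :=
  forall P Q, P \in D -> Q \in D -> exists s, is_path_in D s P Q.

Definition top_connected (D : {set linord A}) P Q : Prop :=
  exists s, [/\ is_path_in D s P Q &
    exists a, all (fun x => is_top x a) s].

Definition TCC (D : {set linord A}) P : linord A -> Prop :=
  fun Q => Q = P \/ top_connected D P Q.

Definition neighbour (D : {set linord A}) (Dbar : linord A -> Prop) Q : Prop :=
  [/\ Q \in D, ~ Dbar Q & exists R, Dbar R /\ adjacent R Q].

Definition connected_two_neighbours (D : {set linord A}) : Prop :=
  dom_connected D /\
  forall P, P \in D -> exists Q1 Q2 a1 a2,
    [/\ neighbour D (TCC D P) Q1, neighbour D (TCC D P) Q2,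
        is_top Q1 a1, is_top Q2 a2 & a1 <> a2].

Definition minimally_rich (D : {set linord A}) : Prop :=
  forall a : A, exists P, P \in D /\ is_top P a.

End Prefs.

Section SCF.
Variables (A : finType) (n : nat) (D : {set linord A}).

Definition profile := 'I_n -> linord A.
Definition in_dom (P : profile) : Prop := forall i, P i \in D.

Definition unanimous (f : profile -> A) : Prop :=
  forall P a, in_dom P -> (forall i, is_top (P i) a) -> f P = a.

Definition update (P : profile) (i : 'I_n) (Q : linord A) : profile :=
  fun j => if j == i then Q else P j.

Definition strategy_proof (f : profile -> A) : Prop :=
  forall P i Q, in_dom P -> Q \in D ->
    ~ prefers (P i) (f (update P i Q)) (f P).

Definition dictatorship (f : profile -> A) : Prop :=
  exists i : 'I_n, forall P, in_dom P -> is_top (P i) (f P).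
End SCF.

(* Main.v *)
Require Import Defs.
From mathcomp Require Import all_boot.
From mathcomp Require Import zify.
From Stdlib Require Import Classical FunctionalExtensionality.
Set Implicit Arguments. Unset Strict Implicit. Unset Printing Implicit Defensive.

Section Basics.
Variable A : finType.
Variable hA : 0 < #|A|.
Implicit Types P Q R : linord A.

Definition o0 : 'I_#|A| := Ordinal hA.
Definition top P := rk P o0.

Lemma rk_inj P : injective (rk P).
Proof. by apply/injectiveP; exact: (valP P). Qed.

Lemma rk_surj P x : exists i, rk P i == x.
Proof.
have := inj_card_onto (@rk_inj P) _ x; rewrite card_ord leqnn => /(_ isT).
by case/codomP=> i ->; exists i.
Qed.

Definition pos P x : 'I_#|A| := xchoose (rk_surj P x).

Lemma rk_pos P x : rk P (pos P x) = x.
Proof. exact/eqP/(xchooseP (rk_surj P x)). Qed.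

Lemma pos_rk P i : pos P (rk P i) = i.
Proof. apply: (@rk_inj P); by rewrite rk_pos. Qed.

Lemma pos_inj P x y : pos P x = pos P y -> x = y.
Proof. by move=> h; rewrite -(rk_pos P x) h rk_pos. Qed.

Lemma pos_injv P x y : nat_of_ord (pos P x) = nat_of_ord (pos P y) -> x = y.
Proof. by move=> /val_inj /pos_inj. Qed.

Lemma is_topE P a : is_top P a <-> top P = a.
Proof.
rewrite /is_top; split.
  case/existsP=> i /andP[/eqP h1 /eqP h2]; rewrite /top -h2; congr (rk P _).
  by apply: val_inj; rewrite h1.
move=> <-; apply/existsP; exists o0; by rewrite /top /= !eqxx.
Qed.

Lemma prefersE P a b : prefers P a b = (pos P a < pos P b).
Proof.
rewrite /prefers; apply/idP/idP.
  case/existsP=> i /existsP[j /and3P[h /eqP ha /eqP hb]].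
  by rewrite -ha -hb !pos_rk.
move=> h; apply/existsP; exists (pos P a); apply/existsP; exists (pos P b).
by rewrite h !rk_pos !eqxx.
Qed.

Lemma pos_top P : nat_of_ord (pos P (top P)) = 0.
Proof. by rewrite /top pos_rk. Qed.

Lemma pos0_top P x : nat_of_ord (pos P x) = 0 -> x = top P.
Proof. move=> h; apply: (@pos_injv P); by rewrite h pos_top. Qed.

Lemma prefers_total P a b : a <> b -> ~~ prefers P a b -> prefers P b a.
Proof.
rewrite !prefersE => hab; rewrite -leqNgt leq_eqVlt => /orP[|//].
by move=> /eqP /pos_injv h; case: hab.
Qed.

Lemma prefers_top P a : a <> top P -> prefers P (top P) a.
Proof.
move=> h; rewrite prefersE; have := pos_top P.
case E: (nat_of_ord (pos P a)) => [|k] h0; last by rewrite h0.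
by case: h; apply: pos0_top.
Qed.

Lemma prefers_negtrans P x y z :
  ~~ prefers P z x -> ~~ prefers P y z -> ~~ prefers P y x.
Proof. rewrite !prefersE; lia. Qed.

Lemma not_prefers_eq P x y : ~~ prefers P x y -> ~~ prefers P y x -> x = y.
Proof.
move=> h1 h2; case: (x =P y) => // hne.
by have := prefers_total hne h1; rewrite (negbTE h2).
Qed.

Lemma adj_pos P Q : adjacent P Q -> exists k : nat, forall x,
  [/\ nat_of_ord (pos P x) = k -> nat_of_ord (pos Q x) = k.+1,
      nat_of_ord (pos P x) = k.+1 -> nat_of_ord (pos Q x) = k &
      nat_of_ord (pos P x) <> k -> nat_of_ord (pos P x) <> k.+1 -> nat_of_ord (pos Q x) = nat_of_ord (pos P x)].
Proof.
rewrite /adjacent; case/existsP=> k /existsP[k' /and4P[/eqP hk /eqP h1 /eqP h2 /forallP h3]].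
exists (val k) => x; split.
- move=> e; have ek : pos P x = k by apply: val_inj.
  have -> : x = rk Q k' by rewrite h2 -ek rk_pos.
  by rewrite pos_rk hk.
- move=> e; have ek : pos P x = k' by apply: val_inj; rewrite /= e hk.
  have -> : x = rk Q k by rewrite h1 -ek rk_pos.
  by rewrite pos_rk.
- move=> n1 n2; have := h3 (pos P x).
  have -> : (pos P x != k) && (pos P x != k') = true.
    apply/andP; split; apply/eqP=> e; [apply: n1 | apply: n2]; by rewrite e // hk.
  move=> /implyP /(_ isT) /eqP e.
  by have := pos_rk Q (pos P x); rewrite e rk_pos => ->.
Qed.

Lemma adjacent_sym P Q : adjacent P Q -> adjacent Q P.
Proof.
rewrite /adjacent; case/existsP=> k /existsP[k' /and4P[hk /eqP h1 /eqP h2 /forallP h3]].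
apply/existsP; exists k; apply/existsP; exists k'.
rewrite hk -h1 -h2 !eqxx /=; apply/forallP=> j; apply/implyP=> hj.
by have := h3 j; rewrite hj /= eq_sym.
Qed.

Lemma adjacent_neq P Q : adjacent P Q -> P <> Q.
Proof.
rewrite /adjacent; case/existsP=> k /existsP[k' /and4P[/eqP hk /eqP h1 _ _]] e; subst Q.
have := rk_inj h1 => e; move: hk; rewrite -e; lia.
Qed.

Lemma LL P Q x y : adjacent P Q -> x <> y ->
  ~~ prefers P y x -> ~~ prefers Q x y ->
  nat_of_ord (pos P x) <> nat_of_ord (pos Q x) /\ nat_of_ord (pos P y) <> nat_of_ord (pos Q y).
Proof.
move=> /adj_pos[k hk] hxy; rewrite !prefersE -!leqNgt => h1 h2.
have hne : nat_of_ord (pos P x) <> nat_of_ord (pos P y) by move/pos_injv.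
have hne' : nat_of_ord (pos Q x) <> nat_of_ord (pos Q y) by move/pos_injv.
case: (hk x) => hx1 hx2 hx3; case: (hk y) => hy1 hy2 hy3.
have [ex|/eqP ex] := eqVneq (nat_of_ord (pos P x)) k.
  have := hx1 ex.
  have [ey|/eqP ey] := eqVneq (nat_of_ord (pos P y)) k.+1.
    have := hy2 ey; lia.
  have ey' : nat_of_ord (pos P y) <> k by lia.
  have := hy3 ey' ey; lia.
have [ex2|/eqP ex2] := eqVneq (nat_of_ord (pos P x)) k.+1.
  have := hx2 ex2; have ey' : nat_of_ord (pos P y) <> k by lia.
  have ey2 : nat_of_ord (pos P y) <> k.+1 by lia.
  have := hy3 ey' ey2; lia.
have := hx3 ex ex2.
have [ey|/eqP ey] := eqVneq (nat_of_ord (pos P y)) k.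
  have := hy1 ey; lia.
have [ey2|/eqP ey2] := eqVneq (nat_of_ord (pos P y)) k.+1.
  have := hy2 ey2; lia.
have := hy3 ey ey2; lia.
Qed.

Lemma topswap R Q : adjacent R Q -> top R <> top Q ->
  [/\ nat_of_ord (pos Q (top R)) = 1, nat_of_ord (pos R (top Q)) = 1 &
      forall x, nat_of_ord (pos R x) <> nat_of_ord (pos Q x) -> x = top R \/ x = top Q].
Proof.
move=> /adj_pos[k hk] hne.
have k0 : k = 0.
  case: (hk (top R)) => _ _ h3; move: h3; rewrite pos_top.
  case: k hk => // k hk h3; case: hne; apply: pos0_top; by rewrite h3.
subst k.
have e1 : nat_of_ord (pos Q (top R)) = 1 by case: (hk (top R)) => h1 _ _; apply: h1; apply: pos_top.
have e2 : nat_of_ord (pos R (top Q)) = 1.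
  case: (hk (top Q)) => h1 h2 h3.
  have [e|/eqP e] := eqVneq (nat_of_ord (pos R (top Q))) 0.
    by case: hne; symmetry; apply: pos0_top.
  have [e'|/eqP e'] := eqVneq (nat_of_ord (pos R (top Q))) 1; first by [].
  have := h3 e e'; rewrite pos_top; lia.
split=> // x hx.
case: (hk x) => h1 h2 h3.
have [e|/eqP e] := eqVneq (nat_of_ord (pos R x)) 0; first by left; apply: pos0_top.
have [e'|/eqP e'] := eqVneq (nat_of_ord (pos R x)) 1.
  by right; apply: (@pos_injv R); rewrite e' e2.
by case: hx; symmetry; apply: h3.
Qed.

Lemma second_pref Q u z : nat_of_ord (pos Q u) = 1 -> z <> top Q -> z <> u -> prefers Q u z.
Proof.
move=> hu h1 h2; rewrite prefersE hu.
have : nat_of_ord (pos Q z) <> 0 by move/pos0_top.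
have : nat_of_ord (pos Q z) <> 1 by rewrite -hu => /pos_injv.
lia.
Qed.


Fixpoint ppath (r : A -> A -> Prop) (x : A) (s : seq A) : Prop :=
  if s is y :: s' then r x y /\ ppath r y s' else True.

Section Graph.
Variables (Erel gr : A -> A -> Prop).
Hypothesis Esym : forall u v, Erel u v -> Erel v u.
Hypothesis Eirr : forall u, ~ Erel u u.
Hypothesis grE : forall u v, gr u v -> Erel u v.
Hypothesis grC : forall u v w, gr u v -> Erel v w -> w <> u -> gr v w.
Hypothesis Edeg : forall u v, exists w, Erel v w /\ w <> u.

Let rev_gr := fun p q => gr q p.

Lemma ppath_last x s : ppath gr x s -> s <> [::] -> exists z, gr z (last x s).
Proof.
elim: s x => [//|y s IH] x /= [h1 h2] _.
case: s IH h2 => [|y' s] IH h2; first by exists x.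
by apply: IH.
Qed.

Lemma chain s : forall x y, uniq (x :: y :: s) -> gr x y -> ppath rev_gr y s ->
  ppath gr x (y :: s).
Proof.
elim: s => [|z s IH] x y /= hu hxy hp; first by [].
split=> //.
case: hp => hzy hp.
have hyz : gr y z.
  apply: grC hxy (Esym (grE hzy)) _.
  move=> e; subst z; move: hu; by rewrite !inE eqxx !orbT.
apply: (IH y z) => //; by case/andP: hu.
Qed.

Lemma back s : forall x w d, uniq s -> x \notin s -> w \in s -> gr x w ->
  ppath rev_gr (head d s) (behead s) -> exists z, gr z (last d s).
Proof.
elim: s => [//|y s IH] x w d /= /andP[hys hu] hx hw hxw hp.
rewrite inE in hw; case/orP: hw => [/eqP e|hw].
  subst w.
  have hu' : uniq (x :: y :: s) by rewrite /= hx hys hu.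
  have hc := chain hu' hxw hp.
  have [z hz] := ppath_last hc (fun e => ltac:(discriminate)).
  by exists z.
case: s IH hys hu hx hw hp => [//|y' s] IH hys hu hx hw hp.
have := IH x w y hu _ hw hxw (proj2 hp).
apply.
by apply/negP=> h; move: hx; rewrite inE h orbT.
Qed.

Lemma uniq_size_le (s : seq A) : uniq s -> size s <= #|A|.
Proof. by move/card_uniqP <-; exact: max_card. Qed.

Lemma GL b y : gr b y -> exists z, gr z b.
Proof.
move=> hby.
suff : forall k v u rest, #|A| - size (v :: u :: rest) <= k ->
  uniq (v :: u :: rest) -> ppath rev_gr v (u :: rest) -> last v (u :: rest) = b ->
  exists z, gr z b.
  move=> H; apply: (H _ y b [::] (leqnn _)) => //.
  have hyb : y != b by apply/eqP => e; subst y; exact: (Eirr (grE hby)).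
  by rewrite /= inE hyb.
elim=> [|k IH] v u rest hk hu hp hl.
all: have [w [hvw hwu]] := Edeg u v.
all: have hgw : gr v w by apply: grC (proj1 hp) hvw hwu.
all: case hw: (w \in v :: u :: rest).
1,3: (move: hw; rewrite inE => /orP[/eqP e|hw];
      [by subst w; case: (Eirr hvw)|];
      have := @back (u :: rest) v w v (proj2 (andP hu)) (proj1 (andP hu)) hw hgw;
      rewrite -hl; move=> /(_ (proj2 hp)) //).
- have hu' : uniq (w :: v :: u :: rest) by rewrite cons_uniq hw hu.
  have := uniq_size_le hu'; move: hk; rewrite /=; lia.
- have hu' : uniq (w :: v :: u :: rest) by rewrite cons_uniq hw hu.
  apply: (IH w v (u :: rest)) => //.
  move: hk; rewrite /=; lia.
Qed.

End Graph.

Section TwoVoter.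
Variable D : {set linord A}.
Hypothesis Hmr : minimally_rich D.
Hypothesis Hc : connected_two_neighbours D.

Definition E u v := (exists R Q, [/\ R \in D, Q \in D, adjacent R Q, top R = u & top Q = v])
   /\ u <> v.

Lemma mr a : exists P, P \in D /\ top P = a.
Proof. by have [P [hP /is_topE ht]] := Hmr a; exists P. Qed.

Lemma E_sym u v : E u v -> E v u.
Proof.
case=> [[R [Q [hR hQ hRQ tR tQ]]] ne]; split; last by move=> e; apply: ne.
by exists Q, R; split=> //; apply: adjacent_sym.
Qed.

Lemma E_irr u : ~ E u u.
Proof. by case=> _. Qed.

Lemma TCC_walk P R : P \in D -> TCC D P R -> exists l,
  [/\ path (@adjacent A) P l, all (fun x => x \in D) l, all (fun x => top x == top P) l
    & last P l = R].
Proof.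
move=> hP [->|[s [[[hh hl hu ha hp] hne] [a hta]]]]; first by exists [::]; split.
case: s hh hl hu ha hp hne hta => [//|x l] /= -> hl hu /andP[_ ha] hp _ /andP[hxa hta].
exists l; split=> //.
apply/allP=> z hz; have := allP hta z hz => /is_topE ->.
by move/is_topE: hxa => ->.
Qed.

Lemma TCC_prop P R : P \in D -> TCC D P R -> R \in D /\ top R = top P.
Proof.
move=> hP hT; have [l [hp ha ht hl]] := TCC_walk hP hT.
case: l hp ha ht hl => [|y l] hp ha ht hl; first by move: hl => /= <-.
have hm : R \in y :: l by rewrite -hl /= mem_last.
by split; [exact: (allP ha) | exact/eqP/(allP ht)].
Qed.

Lemma TCC_ext P R Q : P \in D -> TCC D P R -> Q \in D -> adjacent R Q ->
  top Q = top P -> TCC D P Q.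
Proof.
move=> hP hT hQ hRQ htQ; right.
have [l [hp ha ht hl]] := TCC_walk hP hT.
have hp' : path (@adjacent A) P (rcons l Q) by rewrite rcons_path hp hl.
move: (last_rcons P l Q); case: (shortenP hp') => p' hp'' hu hsub hlast.
exists (P :: p'); split; last first.
  exists (top P); rewrite /= (proj2 (is_topE _ _) erefl) /=.
  apply/allP=> z /hsub; rewrite mem_rcons inE => /orP[/eqP ->|hz].
    exact/is_topE.
  exact/is_topE/eqP/(allP ht).
split=> //; split=> //=.
rewrite hP /=; apply/allP=> z /hsub; rewrite mem_rcons inE => /orP[/eqP ->//|hz].
exact: (allP ha).
Qed.

Lemma deg2 v : exists a1 a2, [/\ E v a1, E v a2 & a1 <> a2].
Proof.
have [P [hP tP]] := mr v.
have [_ H] := Hc; have [Q1 [Q2 [a1 [a2 [n1 n2 t1 t2 ne]]]]] := H P hP.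
have key : forall Q a, neighbour D (TCC D P) Q -> is_top Q a -> E v a.
  move=> Q a [hQ nT [R [hTR hRQ]]] /is_topE tQ.
  have [hR tR] := TCC_prop hP hTR.
  have hne : top Q <> top P.
    by move=> e; apply: nT; apply: (TCC_ext hP hTR hQ hRQ e).
  split; last by rewrite -tP -tQ => e; apply: hne.
  by exists R, Q; split; rewrite // tR.
by exists a1, a2; split=> //; [exact: (key Q1) | exact: (key Q2)].
Qed.

Lemma deg u v : exists w, E v w /\ w <> u.
Proof.
have [a1 [a2 [h1 h2 ne]]] := deg2 v.
case: (a1 =P u) => [e|ne1]; last by exists a1.
by exists a2; split=> // e2; apply: ne; rewrite e e2.
Qed.

Lemma adj_top_E R Q : R \in D -> Q \in D -> adjacent R Q ->
  top R = top Q \/ E (top R) (top Q).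
Proof.
move=> hR hQ hRQ; case: (top R =P top Q) => [|ne]; first by left.
by right; split=> //; exists R, Q.
Qed.

Lemma path_closure (Pr : A -> Prop) : (forall u v, E u v -> Pr u -> Pr v) ->
  forall P Q, P \in D -> Q \in D -> Pr (top P) -> Pr (top Q).
Proof.
move=> hcl P Q hP hQ; have [_ H] := Hc.
have [[|x l] [[/= hh hl hu ha hp] hne]] := (proj1 Hc) P Q hP hQ; first by [].
subst x; move: ha => /= /andP[_ ha]; rewrite -hl.
elim: l P hP hp ha {hl hu hne} => [//|y l IH] P hP /= /andP[hPy hp] /andP[hy ha] hPr.
apply: IH => //.
by case: (adj_top_E hP hy hPy) => [<-//|he]; apply: hcl he hPr.
Qed.


Section G.
Variable g : linord A -> linord A -> A.
Hypothesis gU : forall P, P \in D -> g P P = top P.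
Hypothesis gS1 : forall P1 P1' P2, P1 \in D -> P1' \in D -> P2 \in D ->
  ~~ prefers P1 (g P1' P2) (g P1 P2).
Hypothesis gS2 : forall P1 P2 P2', P1 \in D -> P2 \in D -> P2' \in D ->
  ~~ prefers P2 (g P1 P2') (g P1 P2).

Lemma L0 P1 P1' P2 : P1 \in D -> P1' \in D -> P2 \in D ->
  g P1' P2 = top P1 -> g P1 P2 = top P1.
Proof.
move=> h1 h1' h2 e; case: (g P1 P2 =P top P1) => // ne.
by have := gS1 h1 h1' h2; rewrite e (prefers_top ne).
Qed.

Lemma L0' P1 P2 P2' : P1 \in D -> P2 \in D -> P2' \in D ->
  g P1 P2' = top P2 -> g P1 P2 = top P2.
Proof.
move=> h1 h2 h2' e; case: (g P1 P2 =P top P2) => // ne.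
by have := gS2 h1 h2 h2'; rewrite e (prefers_top ne).
Qed.

Lemma edgeA u v P1 P2 : E u v -> P1 \in D -> P2 \in D -> top P1 = u -> top P2 = v ->
  g P1 P2 = u \/ g P1 P2 = v.
Proof.
case=> [[R [Q [hR hQ hRQ tR tQ]]] huv] h1 h2 t1 t2.
have hne : top R <> top Q by rewrite tR tQ.
have [sQ sR _] := topswap hRQ hne.
rewrite tR in sQ; rewrite tQ in sR.
have gPQ : g P1 Q = u \/ g P1 Q = v.
  case: (g P1 Q =P u) => [|nu]; [by left|right].
  case: (g P1 Q =P v) => // nv.
  have := gS2 h1 hQ h1; rewrite gU // t1.
  by rewrite (second_pref sQ) // tQ.
have gRP : g R P2 = u \/ g R P2 = v.
  case: (g R P2 =P u) => [|nu]; [by left|right].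
  case: (g R P2 =P v) => // nv.
  have := gS1 hR h2 h2; rewrite gU // t2.
  by rewrite (second_pref sR) // tR.
case: gPQ => gPQ; last first.
  by right; rewrite -t2; apply: (L0' h1 h2 hQ); rewrite gPQ t2.
case: gRP => gRP.
  by left; rewrite -t1; apply: (L0 h1 hR h2); rewrite gRP t1.
have e1 : g R Q = top R by apply: (L0 hR h1 hQ); rewrite gPQ tR.
have e2 : g R Q = top Q by apply: (L0' hR hQ h2); rewrite gRP tQ.
by case: huv; rewrite -tR -tQ -e1 -e2.
Qed.

Lemma edgeA2 u v P1 P2 P1' P2' : E u v -> P1 \in D -> P2 \in D -> P1' \in D -> P2' \in D ->
  top P1 = u -> top P2 = v -> top P1' = u -> top P2' = v ->
  g P1 P2 = u -> g P1' P2' = u.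
Proof.
move=> he h1 h2 h1' h2' t1 t2 t1' t2' e.
have e1 : g P1' P2 = u by rewrite -t1'; apply: (L0 h1' h1 h2); rewrite e t1'.
case: (edgeA he h1' h2' t1' t2') => // e2.
have : g P1' P2 = v by rewrite -t2; apply: (L0' h1' h2 h2'); rewrite e2 t2.
by rewrite e1 => e3; case: he => _; rewrite e3.
Qed.

Definition M1 u v := exists P1 P2,
  [/\ P1 \in D, P2 \in D, top P1 = u, top P2 = v & g P1 P2 = u].

Lemma M1_all u v P1 P2 : E u v -> M1 u v -> P1 \in D -> P2 \in D ->
  top P1 = u -> top P2 = v -> g P1 P2 = u.
Proof.
move=> he [Q1 [Q2 [hq1 hq2 tq1 tq2 e]]] h1 h2 t1 t2.
exact: (edgeA2 he hq1 hq2 h1 h2 tq1 tq2 t1 t2 e).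
Qed.

Lemma nM1_all u v P1 P2 : E u v -> ~ M1 u v -> P1 \in D -> P2 \in D ->
  top P1 = u -> top P2 = v -> g P1 P2 = v.
Proof.
move=> he hn h1 h2 t1 t2; case: (edgeA he h1 h2 t1 t2) => // e.
by case: hn; exists P1, P2.
Qed.

Lemma FC u v w : E u v -> M1 u v -> E v w -> w <> u -> M1 v w.
Proof.
move=> huv hm hvw hwu.
have [[R1 [Q1 [hR1 hQ1 hRQ1 tR1 tQ1]]] nuv] := huv.
have [[R2 [Q2 [hR2 hQ2 hRQ2 tR2 tQ2]]] nvw] := hvw.
have e1 : g R1 R2 = u by apply: (M1_all huv hm).
have e2 : g R1 Q2 = u.
  case: (g R1 Q2 =P u) => // ne.
  have hxy : g R1 R2 <> g R1 Q2 by rewrite e1 => e; apply: ne.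
  have [hm1 _] := LL hRQ2 hxy (gS2 hR1 hR2 hQ2) (gS2 hR1 hQ2 hR2).
  have hts : top R2 <> top Q2 by rewrite tR2 tQ2.
  have [_ _ hsw] := topswap hRQ2 hts.
  by case: (hsw _ hm1); rewrite e1 ?tR2 ?tQ2 => e; [case: nuv | case: hwu].
exists Q1, Q2; split=> //.
case: (edgeA hvw hQ1 hQ2 tQ1 tQ2) => // e3.
have hxy : g R1 Q2 <> g Q1 Q2 by rewrite e2 e3 => e; apply: hwu.
have [_ hm2] := LL hRQ1 hxy (gS1 hR1 hQ1 hQ2) (gS1 hQ1 hR1 hQ2).
have hts : top R1 <> top Q1 by rewrite tR1 tQ1.
have [_ _ hsw] := topswap hRQ1 hts.
by case: (hsw _ hm2); rewrite e3 ?tR1 ?tQ1 => e; [case: hwu | case: nvw].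
Qed.

Definition Tset P2 x := exists P1, P1 \in D /\ g P1 P2 = x.

Lemma Tset_top P2 : P2 \in D -> Tset P2 (top P2).
Proof. by move=> h; exists P2; rewrite gU. Qed.

Lemma X2a_fwd P2 y : P2 \in D -> Tset P2 y -> M1 y (top P2).
Proof.
move=> h2 [P1' [h1' e]]; have [P1 [h1 t1]] := mr y.
exists P1, P2; split=> //.
by rewrite -t1; apply: (L0 h1 h1' h2); rewrite e t1.
Qed.

Lemma X2a_bwd P2 y : P2 \in D -> E y (top P2) -> M1 y (top P2) -> Tset P2 y.
Proof.
move=> h2 he hm; have [P1 [h1 t1]] := mr y.
by exists P1; split=> //; apply: (M1_all he hm).
Qed.

Lemma X2b P2 t x : P2 \in D -> E t x -> ~ Tset P2 t -> Tset P2 x -> ~ M1 t x.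
Proof.
move=> h2 he nT [P1' [h1' ex]] hm.
have [[R [Q [hR hQ hRQ tR tQ]]] ntx] := he.
have hts : top R <> top Q by rewrite tR tQ.
have [_ sR _] := topswap hRQ hts.
rewrite tQ in sR.
have hpref := gS1 hR h1' h2; rewrite ex in hpref.
have ho : g R P2 = x.
  case: (g R P2 =P x) => // nx.
  have nt : g R P2 <> top R by rewrite tR => e; apply: nT; exists R.
  by rewrite (second_pref sR nt nx) in hpref.
have e1 : g R Q = x by rewrite -tQ; apply: (L0' hR hQ h2); rewrite ho tQ.
have e2 : g R Q = t by apply: (M1_all he hm).
by case: ntx; rewrite -e1 -e2.
Qed.

Lemma RC b y y' : E y b -> E y' b -> M1 y b -> ~ M1 y' b -> False.
Proof.
move=> hyb hy'b hm hnm.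
have [P2 [h2 t2]] := mr b; subst b.
have Ty : Tset P2 y by apply: X2a_bwd.
have nTy' : ~ Tset P2 y' by move/(X2a_fwd h2).
have hne : y' <> y by move=> e; apply: hnm; rewrite e.
have hm' : M1 (top P2) y' := FC hyb hm (E_sym hy'b) hne.
pose gr u v := E u v /\ M1 u v /\ ~ Tset P2 v.
have grC : forall u v w, gr u v -> E v w -> w <> u -> gr v w.
  move=> u v w [huv [hmuv nTv]] hvw hwu.
  have hmvw := FC huv hmuv hvw hwu.
  split=> //; split=> // Tw.
  exact: (X2b h2 hvw nTv Tw hmvw).
have [z [_ [_ hz]]] := @GL E gr (@E_sym) (@E_irr) (fun u v h => proj1 h) grC deg
  (top P2) y' (conj (E_sym hy'b) (conj hm' nTy')).
by apply: hz; apply: Tset_top.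
Qed.

Lemma ML : (exists u v, E u v /\ M1 u v) -> (exists p q, E p q /\ ~ M1 p q) ->
  exists b y y', [/\ E y b, E y' b, M1 y b & ~ M1 y' b].
Proof.
move=> [u [v [huv hm]]] [p [q [hpq hnm]]].
apply: NNPP => hno.
have nomix : forall b y y', E y b -> E y' b -> M1 y b -> M1 y' b.
  move=> b y y' h1 h2 h3; apply: NNPP => h4; apply: hno; by exists b, y, y'.
pose V1 b := exists y, E y b /\ M1 y b.
have hcl : forall b w, E b w -> V1 b -> V1 w.
  move=> b w hbw [y [hyb hmy]].
  have [y0 [hby0 hy0w]] := deg w b.
  have hm0 : M1 y0 b := nomix _ _ _ hyb (E_sym hby0) hmy.
  exists b; split=> //; apply: (FC (E_sym hby0) hm0 hbw).
  by move=> e; apply: hy0w; rewrite e.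
have [Pv [hv tv]] := mr v; have [Pq [hq tq]] := mr q.
have := path_closure hcl hv hq; rewrite tv tq.
case=> [|y [hyq hmy]]; first by exists u.
by apply: hnm; apply: (nomix _ _ _ hyq hpq hmy).
Qed.

Lemma uniform : (forall u v, E u v -> M1 u v) \/ (forall u v, E u v -> ~ M1 u v).
Proof.
case: (classic (exists u v, E u v /\ M1 u v)) => h1; last first.
  by right=> u v he hm; apply: h1; exists u, v.
case: (classic (exists p q, E p q /\ ~ M1 p q)) => h2; last first.
  by left=> u v he; apply: NNPP => hn; apply: h2; exists u, v.
have [b [y [y' [? ? ? ?]]]] := ML h1 h2.
by case: (RC (b:=b) (y:=y) (y':=y')).
Qed.

Lemma dict1 : (forall u v, E u v -> M1 u v) ->
  forall P1 P2, P1 \in D -> P2 \in D -> g P1 P2 = top P1.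
Proof.
move=> hall P1 P2 h1 h2.
have : Tset P2 (top P1).
  apply: NNPP => nT.
  have hcl : forall u v, E u v -> ~ Tset P2 u -> ~ Tset P2 v.
    by move=> u v he nu tv; apply: (X2b h2 he nu tv); apply: hall.
  by apply: (path_closure hcl h1 h2 nT); apply: Tset_top.
case=> P1' [h1' e]; exact: (L0 h1 h1' h2 e).
Qed.

End G.

Lemma two_voter (g : linord A -> linord A -> A) :
  (forall P, P \in D -> g P P = top P) ->
  (forall P1 P1' P2, P1 \in D -> P1' \in D -> P2 \in D -> ~~ prefers P1 (g P1' P2) (g P1 P2)) ->
  (forall P1 P2 P2', P1 \in D -> P2 \in D -> P2' \in D -> ~~ prefers P2 (g P1 P2') (g P1 P2)) ->
  (forall P1 P2, P1 \in D -> P2 \in D -> g P1 P2 = top P1) \/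
  (forall P1 P2, P1 \in D -> P2 \in D -> g P1 P2 = top P2).
Proof.
move=> hU hS1 hS2.
case: (uniform hU hS1 hS2) => hall; first by left; apply: dict1.
right=> P1 P2 h1 h2.
pose g' := fun P Q => g Q P.
have hU' : forall P, P \in D -> g' P P = top P by move=> P hP; rewrite /g' hU.
have hS1' : forall P1 P1' P2, P1 \in D -> P1' \in D -> P2 \in D ->
    ~~ prefers P1 (g' P1' P2) (g' P1 P2).
  by move=> a b c ha hb hc; rewrite /g'; apply: hS2.
have hS2' : forall P1 P2 P2', P1 \in D -> P2 \in D -> P2' \in D ->
    ~~ prefers P2 (g' P1 P2') (g' P1 P2).
  by move=> a b c ha hb hc; rewrite /g'; apply: hS1.
have hall' : forall u v, E u v -> M1 g' u v.
  move=> u v he; have [Q1 [hq1 tq1]] := mr u; have [Q2 [hq2 tq2]] := mr v.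
  exists Q1, Q2; split=> //; rewrite /g'.
  exact: (nM1_all hU hS1 hS2 (E_sym he) (hall _ _ (E_sym he)) hq2 hq1 tq2 tq1).
exact: (dict1 hU' hS1' hS2' hall' h2 h1).
Qed.

End TwoVoter.

Section NVoter.
Variable D : {set linord A}.
Hypothesis Hmr : minimally_rich D.
Hypothesis Hc : connected_two_neighbours D.

Lemma f_ext n (f : ('I_n -> linord A) -> A) (P Q : 'I_n -> linord A) :
  (forall i, P i = Q i) -> f P = f Q.
Proof. by move=> h; rewrite (functional_extensionality P Q h). Qed.

Lemma ord_eqE n (i j : 'I_n) : (i == j) = (nat_of_ord i == nat_of_ord j).
Proof. by []. Qed.

Lemma SPb n (f : ('I_n -> linord A) -> A) : strategy_proof D f ->
  forall (Pr : 'I_n -> linord A) (i : 'I_n) (Q : linord A),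
  in_dom D Pr -> Q \in D -> ~~ prefers (Pr i) (f (update Pr i Q)) (f Pr).
Proof. by move=> hS Pr i Q hP hQ; apply/negP; apply: hS. Qed.

Lemma main_n n : forall f : ('I_n.+1 -> linord A) -> A,
  unanimous D f -> strategy_proof D f -> dictatorship D f.
Proof.
elim: n => [|n IH] f hU hS.
  exists ord0 => P hP; apply/is_topE; symmetry; apply: hU => // i.
  by rewrite (ord1 i); apply/is_topE.
have hSb := SPb hS.
pose mu := fun i : 'I_n.+2 => (inord i.-1 : 'I_n.+1).
have vmu : forall i, nat_of_ord (mu i) = i.-1.
  move=> i; rewrite /mu inordK //; have := ltn_ord i; lia.
pose g := fun Q : 'I_n.+1 -> linord A => f (fun i => Q (mu i)).
have hUg : unanimous D g.
  by move=> Q a hQ ht; apply: hU => i; [apply: hQ | apply: ht].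
have hSg : strategy_proof D g.
  move=> Q j Q' hQ hQ'; apply/negP.
  pose P := fun i => Q (mu i).
  have hP : in_dom D P by move=> i; apply: hQ.
  case: (j =P ord0) => [ej|nj].
    subst j.
    pose Pm := update P ord0 Q'.
    have hPm : in_dom D Pm by move=> i; rewrite /Pm /update; case: ifP => _; [exact: hQ' | exact: hP].
    have i1 : nat_of_ord (inord 1 : 'I_n.+2) = 1 by rewrite inordK.
    have e1 : g (update Q ord0 Q') = f (update Pm (inord 1) Q').
      rewrite /g; apply: f_ext => i; rewrite /update /Pm /P !ord_eqE vmu i1 /=.
      by case: i => [[|[|i]] hi].
    have eP0 : P ord0 = Q ord0 by rewrite /P; congr Q; apply: val_inj => /=; rewrite vmu.
    have ePm1 : Pm (inord 1) = Q ord0.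
      rewrite /Pm /update ord_eqE i1 /= /P; congr Q; apply: val_inj => /=; by rewrite vmu i1.
    have s1 := hSb P ord0 Q' hP hQ'.
    have s2 := hSb Pm (inord 1) Q' hPm hQ'.
    rewrite eP0 in s1; rewrite ePm1 in s2.
    rewrite e1; exact: (prefers_negtrans s1 s2).
  pose j' : 'I_n.+2 := inord j.+1.
  have vj' : nat_of_ord j' = j.+1 by rewrite inordK //; have := ltn_ord j; lia.
  have e1 : g (update Q j Q') = f (update P j' Q').
    rewrite /g; apply: f_ext => i; rewrite /update /P !ord_eqE vmu vj'.
    have : nat_of_ord j <> 0 by move=> e; apply: nj; apply: val_inj.
    case: i => [[|i] hi] /= hj0.
      by have -> : (0 == j) = false by apply/eqP; lia.
    by [].
  have eP : P j' = Q j by rewrite /P; congr Q; apply: val_inj => /=; rewrite vmu vj'.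
  have := hSb P j' Q' hP hQ'; rewrite eP -e1; exact.
have [j0 hj0] := IH g hUg hSg.
case: (j0 =P ord0) => [ej0|nj0]; last first.
  (* dictator is an original voter *)
  have vj0 : nat_of_ord j0 <> 0 by move=> e; apply: nj0; apply: val_inj.
  pose d : 'I_n.+2 := inord j0.+1.
  have vd : nat_of_ord d = j0.+1 by rewrite inordK //; have := ltn_ord j0; lia.
  exists d => P hP.
  have i1 : nat_of_ord (inord 1 : 'I_n.+2) = 1 by rewrite inordK.
  pose Qa := fun i : 'I_n.+1 => if i == ord0 then P ord0 else P (inord i.+1).
  pose Qb := fun i : 'I_n.+1 => if i == ord0 then P (inord 1) else P (inord i.+1).
  have hQa : in_dom D Qa by move=> i; rewrite /Qa; case: ifP => _; exact: hP.
  have hQb : in_dom D Qb by move=> i; rewrite /Qb; case: ifP => _; exact: hP.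
  have ta := hj0 Qa hQa; have tb := hj0 Qb hQb.
  have eQa : Qa j0 = P d by rewrite /Qa (negbTE (introN eqP nj0)).
  have eQb : Qb j0 = P d by rewrite /Qb (negbTE (introN eqP nj0)).
  rewrite eQa in ta; rewrite eQb in tb.
  move/is_topE: ta => ta; move/is_topE: tb => tb.
  have ea : g Qa = f (update P (inord 1) (P ord0)).
    rewrite /g; apply: f_ext => i; case: i => [[|[|i]] hi];
      rewrite /update /Qa !ord_eqE /= ?vmu ?i1 /= ?vmu //;
      (congr P; apply: val_inj => /=; rewrite ?inordK //; lia).
  have eb : g Qb = f (update P ord0 (P (inord 1))).
    rewrite /g; apply: f_ext => i; case: i => [[|[|i]] hi];
      rewrite /update /Qb !ord_eqE /= ?vmu ?i1 /= ?vmu //;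
      (congr P; apply: val_inj => /=; rewrite ?inordK //; lia).
  have hP0 : P ord0 \in D by apply: hP.
  have hP1 : P (inord 1) \in D by apply: hP.
  have hPa : in_dom D (update P (inord 1) (P ord0)).
    by move=> i; rewrite /update; case: ifP => _; exact: hP.
  have s1 := hSb _ (inord 1) (P (inord 1)) hPa hP1.
  have s2 := hSb P ord0 (P (inord 1)) hP hP1.
  have eup : f (update (update P (inord 1) (P ord0)) (inord 1) (P (inord 1))) = f P.
    by apply: f_ext => i; rewrite /update; case: ifP => [/eqP -> //|->].
  rewrite eup -ea -ta in s1.
  have eup2 : (update P (inord 1) (P ord0)) (inord 1) = P ord0 by rewrite /update eqxx.
  rewrite eup2 in s1.
  rewrite -eb -tb in s2.
  apply/is_topE; exact: (not_prefers_eq s2 s1).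
(* the merged voter is the dictator of g *)
subst j0.
have i1 : nat_of_ord (inord 1 : 'I_n.+2) = 1 by rewrite inordK.
pose mk := fun (P1 P2 : linord A) (R : nat -> linord A) (i : 'I_n.+2) =>
  if nat_of_ord i == 0 then P1 else if nat_of_ord i == 1 then P2 else R (i - 2).
pose h := fun (R : nat -> linord A) (P1 P2 : linord A) => f (mk P1 P2 R).
pose Rin := fun R : nat -> linord A => forall k, R k \in D.
have mk_dom : forall P1 P2 (R : nat -> linord A), P1 \in D -> P2 \in D -> Rin R -> in_dom D (mk P1 P2 R).
  by move=> P1 P2 R h1 h2 hR i; rewrite /mk; case: ifP => _ //; case: ifP => _; [exact: h2 | exact: hR].
have hUh : forall (R : nat -> linord A), Rin R -> forall P, P \in D -> h R P P = top P.
  move=> R hR P hP.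
  pose Q := fun i : 'I_n.+1 => if nat_of_ord i == 0 then P else R i.-1.
  have hQ : in_dom D Q by move=> i; rewrite /Q; case: ifP => _; [exact: hP | exact: hR].
  have := hj0 Q hQ; rewrite /Q /= => /is_topE ->.
  rewrite /h /g; apply: f_ext => i; rewrite /mk /Q vmu.
  case: i => [[|[|i]] hi] //=; by rewrite subn2.
have hS1h : forall (R : nat -> linord A), Rin R -> forall P1 P1' P2, P1 \in D -> P1' \in D -> P2 \in D ->
    ~~ prefers P1 (h R P1' P2) (h R P1 P2).
  move=> R hR P1 P1' P2 h1 h1' h2.
  have := hSb _ ord0 P1' (mk_dom _ _ _ h1 h2 hR) h1'.
  have -> : mk P1 P2 R ord0 = P1 by [].
  have -> : f (update (mk P1 P2 R) ord0 P1') = h R P1' P2.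
    apply: f_ext => i; rewrite /update /mk ord_eqE.
    by case: i => [[|[|i]] hi].
  by [].
have hS2h : forall (R : nat -> linord A), Rin R -> forall P1 P2 P2', P1 \in D -> P2 \in D -> P2' \in D ->
    ~~ prefers P2 (h R P1 P2') (h R P1 P2).
  move=> R hR P1 P2 P2' h1 h2 h2'.
  have := hSb _ (inord 1) P2' (mk_dom _ _ _ h1 h2 hR) h2'.
  have -> : mk P1 P2 R (inord 1) = P2 by rewrite /mk i1.
  have -> : f (update (mk P1 P2 R) (inord 1) P2') = h R P1 P2'.
    apply: f_ext => i; rewrite /update /mk ord_eqE i1.
    by case: i => [[|[|i]] hi].
  by [].
have tv : forall (R : nat -> linord A), Rin R ->
    (forall P1 P2, P1 \in D -> P2 \in D -> h R P1 P2 = top P1) \/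
    (forall P1 P2, P1 \in D -> P2 \in D -> h R P1 P2 = top P2).
  by move=> R hR; apply: (two_voter Hmr Hc); [exact: hUh | exact: hS1h | exact: hS2h].
pose Dv0 := fun (R : nat -> linord A) => forall P1 P2, P1 \in D -> P2 \in D -> h R P1 P2 = top P1.
have h_ext : forall (R R' : nat -> linord A), (forall m, m < n -> R m = R' m) ->
    forall P1 P2, h R P1 P2 = h R' P1 P2.
  move=> R R' he P1 P2; rewrite /h; apply: f_ext => i; rewrite /mk.
  case: ifP => // /negbT/eqP h0; case: ifP => // /negbT/eqP h1; apply: he; have := ltn_ord i; lia.
have transfer : forall (R R' : nat -> linord A), Rin R -> Rin R' -> Dv0 R -> Dv0 R'.
  move=> R R' hR hR' h0.
  pose Rk := fun k m : nat => if m < k then R' m else R m.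
  have hRk : forall k, Rin (Rk k) by move=> k m; rewrite /Rk; case: ifP.
  suff : forall k, Dv0 (Rk k).
    move=> /(_ n) hn P1 P2 h1 h2; rewrite -(h_ext (Rk n)) ?hn //.
    by move=> m hm; rewrite /Rk hm.
  elim=> [|k IHk].
    move=> P1 P2 h1 h2; rewrite (h_ext (Rk 0) R) ?h0 //.
  case: (tv _ (hRk k.+1)) => // hv1.
  case: (ltnP k n) => hkn; last first.
    move=> P1 P2 h1 h2; rewrite (h_ext (Rk k.+1) (Rk k)) ?IHk //.
    move=> m hm; rewrite /Rk.
    have -> : m < k.+1 by lia.
    by have -> : m < k by lia.
  exfalso.
  pose v : 'I_n.+2 := inord k.+2.
  have vv : nat_of_ord v = k.+2 by rewrite inordK //; lia.
  pose X := R k.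
  pose a0 := top X.
  have [b0 [_ hne]] := deg Hmr Hc a0 a0.
  have [a [b [hab hXba]]] : exists a b, a <> b /\ prefers X b a.
    case hp: (prefers X a0 b0).
      by exists b0, a0; split.
    exists a0, b0; split; first by move=> e; apply: hne; rewrite e.
    apply: prefers_total; first by move=> e; apply: hne; rewrite e.
    by rewrite hp.
  have [P1 [h1 t1]] := mr Hmr a; have [P2 [h2 t2]] := mr Hmr b.
  have ea : h (Rk k) P1 P2 = a by rewrite IHk // t1.
  have eb : h (Rk k.+1) P1 P2 = b by rewrite hv1 // t2.
  have e_up : f (update (mk P1 P2 (Rk k)) v (R' k)) = h (Rk k.+1) P1 P2.
    rewrite /h; apply: f_ext => i; rewrite /update /mk ord_eqE vv.
    case: ifP => [/eqP ei|/negbT/eqP ni].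
      by rewrite ei /= /Rk subn2 /= ltnSn.
    case: ifP => // /negbT/eqP n0; case: ifP => // /negbT/eqP n1.
    rewrite /Rk.
    have -> : (i - 2 < k.+1) = (i - 2 < k) by apply/idP/idP; lia.
    by [].
  have hX : (mk P1 P2 (Rk k)) v = X by rewrite /mk vv /Rk /= subn2 /= ltnn.
  have := hSb (mk P1 P2 (Rk k)) v (R' k) (mk_dom _ _ _ h1 h2 (hRk k)) (hR' k).
  rewrite hX e_up eb.
  have -> : f (mk P1 P2 (Rk k)) = a by [].
  by rewrite hXba.
have [x0 _] : exists x : A, true by case/card_gt0P: hA => x _; exists x.
have [P0 [hP0 _]] := mr Hmr x0.
pose R0 := fun _ : nat => P0.
have hR0 : Rin R0 by [].
have restE : forall P : 'I_n.+2 -> linord A,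
    f P = h (fun m => P (inord m.+2)) (P ord0) (P (inord 1)).
  move=> P; rewrite /h; apply: f_ext => i; rewrite /mk.
  case: i => [[|[|i]] hi] /=; congr P; apply: val_inj => /=; rewrite ?subn2 ?inordK //.
case: (classic (Dv0 R0)) => hD0.
  exists ord0 => P hP; apply/is_topE; rewrite restE; symmetry.
  have hrest : Rin (fun m => P (inord m.+2)) by move=> m; apply: hP.
  exact: (transfer _ _ hR0 hrest hD0 _ _ (hP ord0) (hP (inord 1))).
exists (inord 1) => P hP; apply/is_topE; rewrite restE; symmetry.
have hrest : Rin (fun m => P (inord m.+2)) by move=> m; apply: hP.
case: (tv _ hrest) => hv.
  by case: hD0; apply: (transfer _ _ hrest hR0 hv).
exact: hv.
Qed.

End NVoter.

End Basics.

Theorem theorem3 (A : finType) (n : nat) (D : {set linord A})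
    (f : ('I_n -> linord A) -> A) :
  3 <= #|A| -> 2 <= n ->
  minimally_rich D -> connected_two_neighbours D ->
  unanimous D f -> strategy_proof D f ->
  dictatorship D f.
Proof.
move=> hA3 hn hmr hc hU hS.
have hA : 0 < #|A| by apply: leq_trans hA3.
case: n f hn hU hS => [//|m] f _ hU hS.
exact: (main_n hA hmr hc hU hS).
Qed.
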